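(* Let $K\ge 1$, $N\ge1$, and for $k\in\{0,1,\dots,K\}$ let $\bm{H}_k\colon\mathbb{R}^{d_k}\to\mathbb{R}^{N\times E_k}$ be differentiable maps with bounded derivative, $\lVert\nabla\bm{H}_k(\bm{x}_k)\rVert\le H$ for all $\bm{x}_k$ and all $k$, and let $\Phi\colon\mathbb{R}^{N\times E}\to\mathbb{R}$, $E=\sum_kE_k$, be differentiable. Let $\mathcal{C}$ be a contractive compressor with parameter $\alpha\in(0,1]$. Let $\{\bm{x}^t\}$, $\{\bm{G}^t_k\}$ be generated by the EF-VFL algorithm with stepsize $\eta>0$ and batch size $B$ described in the context, and assume (unbiasedness) $\mathbb{E}[\tilde{\bm{g}}^t\mid\mathcal{F}_t]=\bm{g}^t$ and (bounded variance) $\mathbb{E}[\lVert\tilde{\bm{g}}^t-\bm{g}^t\rVert^2\mid\mathcal{F}_t]\le\sigma^2/B$ for all $t\in\{0,\dots,T-1\}$, for some $\sigma\ge0$. Then for all $t\ge0$ and all $\epsilon>0$, $$\mathbb{E}D^{(t+1)}\le(1-\alpha)(1+\epsilon)\,\mathbb{E}D^{(t)}+(1-\alpha)(1+\epsilon^{-1})\eta^2H^2\Big(\mathbb{E}\lVert\bm{g}^t\rVert^2+\frac{\sigma^2}{B}\Big).$$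
   Context: Norms of matrices are Frobenius norms, and the norm of the third-order tensor $\nabla\bm{H}_k(\bm{x}_k)$ is its Euclidean norm; $\nabla_k$ denotes the partial derivative with respect to the $k$-th block. A contractive compressor is a (possibly random) map $\mathcal{C}$ with $\mathbb{E}\lVert\mathcal{C}(\bm{v})-\bm{v}\rVert^2\le(1-\alpha)\lVert\bm{v}\rVert^2$ for all $\bm{v}$, with independent randomness at each application. EF-VFL: $\bm{G}^0_k=\mathcal{C}(\bm{H}_k(\bm{x}^0_k))$; for each $t$, $\bm{x}^{t+1}=\bm{x}^t-\eta\tilde{\bm{g}}^t$ and $\bm{G}^{t+1}_k=\bm{G}^t_k+\mathcal{C}(\bm{H}_k(\bm{x}^{t+1}_k)-\bm{G}^t_k)$, $k=0,\dots,K$. The surrogate gradient $\bm{g}^t=(\bm{g}^t_0,\dots,\bm{g}^t_K)$ has blocks $\bm{g}^t_k=\sum_{i=1}^N\sum_{j=1}^{E_k}[\nabla_k\Phi(\bm{G}^t_0,\dots,\bm{G}^t_{k-1},\bm{H}_k(\bm{x}^t_k),\bm{G}^t_{k+1},\dots,\bm{G}^t_K)]_{ij}[\nabla\bm{H}_k(\bm{x}^t_k)]_{ij:}$, and $\tilde{\bm{g}}^t$ is its mini-batch analogue on a sampled batch $\mathcal{B}^t\subseteq[N]$ of size $B$. $\mathcal{F}_t=\sigma(\bm{G}^0,\bm{x}^1,\bm{G}^1,\dots,\bm{x}^t,\bm{G}^t)$ with $\bm{G}^t=\{\bm{G}^t_0,\dots,\bm{G}^t_K\}$. $D^{(t)}=\sum_{k=0}^K\lVert\bm{G}^t_k-\bm{H}_k(\bm{x}^t_k)\rVert^2$.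 Expectations are over the randomness of $\mathcal{C}$ and of the batches. *)

(* Defs.v *)
From HB Require Import structures.
From mathcomp Require Import all_boot all_order all_algebra.
From mathcomp Require Import all_classical all_reals all_analysis.
Set Implicit Arguments. Unset Strict Implicit. Unset Printing Implicit Defensive.
Import Order.TTheory GRing.Theory Num.Theory.
Import numFieldNormedType.Exports.
Local Open Scope classical_set_scope.
Local Open Scope ring_scope.

Section Defs.
Variable R : realType.

Definition fro2 (m n : nat) (A : 'M[R]_(m, n)) : R :=
  \sum_(i < m) \sum_(j < n) A i j ^+ 2.

Definition bnorm2 (K : nat) (d : 'I_K.+1 -> nat) (v : forall k, 'M[R]_(1, d k)) : R :=
  \sum_(k < K.+1) fro2 (v k).

Definition evec (n : nat) (l : 'I_n) : 'rV[R]_n := delta_mx 0 l.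

(* Euclidean norm of the third-order tensor nabla H(x), with entries
   [nabla H(x)]_{i j l} = d H_{ij} / d x_l *)
Definition jac_norm (n m e : nat) (H : 'rV[R]_n -> 'M[R]_(m, e)) (x : 'rV[R]_n) : R :=
  Num.sqrt (\sum_(i < m) \sum_(j < e) \sum_(l < n) (('D_(evec l) H x) i j) ^+ 2).

Definition jac_row (n m e : nat) (H : 'rV[R]_n -> 'M[R]_(m, e)) (x : 'rV[R]_n)
  (i : 'I_m) (j : 'I_e) : 'rV[R]_n :=
  \row_(l < n) ('D_(evec l) H x) i j.

(* The direction in R^{N x E}, E = sum_k E_k, of the entry (i,j) of the k-th block. *)
Definition blk_dir (N K : nat) (E : 'I_K.+1 -> nat) (k : 'I_K.+1) (i : 'I_N) (j : 'I_(E k))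
  : 'M[R]_(N, \sum_(k' < K.+1) E k') :=
  \mxrow_(k' < K.+1)
     (\matrix_(i' < N, j' < E k')
        ((k' == k) && (i' == i) && (nat_of_ord j' == nat_of_ord j))%:R).

Definition blk_grad (N K : nat) (E : 'I_K.+1 -> nat)
  (Phi : 'M[R]_(N, \sum_(k' < K.+1) E k') -> R) (Z : 'M[R]_(N, \sum_(k' < K.+1) E k'))
  (k : 'I_K.+1) : 'M[R]_(N, E k) :=
  \matrix_(i < N, j < E k) 'D_(@blk_dir N K E k i j) Phi Z.

Definition blk_point (N K : nat) (d E : 'I_K.+1 -> nat)
  (Hf : forall k, 'rV[R]_(d k) -> 'M[R]_(N, E k))
  (x : forall k, 'rV[R]_(d k)) (G : forall k, 'M[R]_(N, E k)) (k : 'I_K.+1)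
  : 'M[R]_(N, \sum_(k' < K.+1) E k') :=
  \mxrow_(k' < K.+1) (if k' == k then Hf k' (x k') else G k').

Definition surr_grad (N K : nat) (d E : 'I_K.+1 -> nat)
  (Hf : forall k, 'rV[R]_(d k) -> 'M[R]_(N, E k))
  (Phi : 'M[R]_(N, \sum_(k' < K.+1) E k') -> R)
  (x : forall k, 'rV[R]_(d k)) (G : forall k, 'M[R]_(N, E k)) (k : 'I_K.+1)
  : 'rV[R]_(d k) :=
  \sum_(i < N) \sum_(j < E k)
     (blk_grad Phi (blk_point Hf x G k) k i j) *: jac_row (Hf k) (x k) i j.

Definition Dgap (N K : nat) (d E : 'I_K.+1 -> nat)
  (Hf : forall k, 'rV[R]_(d k) -> 'M[R]_(N, E k))
  (x : forall k, 'rV[R]_(d k)) (G : forall k, 'M[R]_(N, E k)) : R :=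
  \sum_(k < K.+1) fro2 (G k - Hf k (x k)).

End Defs.

Section Prob.
Context {R : realType} {dO : measure_display} {Omega : measurableType dO}.

Definition gen_by (fs : set (Omega -> R)) : set (set Omega) :=
  <<s [set A | exists f, fs f /\ exists B : set R, measurable B /\ A = f @^-1` B] >>.

Definition Fmeas (F : set (set Omega)) (f : Omega -> R) : Prop :=
  forall B : set R, measurable B -> F (f @^-1` B).

(* E[X | F] = Y  (defining property of conditional expectation; X integrable,
   Y an F-measurable integrable version) *)
Definition cexp_eq (P : probability Omega R) (F : set (set Omega)) (X Y : Omega -> R) : Prop :=
  [/\ P.-integrable setT (fun w => (X w)%:E), P.-integrable setT (fun w => (Y w)%:E),
      Fmeas F Y &
      forall A, F A -> (\int[P]_(w in A) (X w)%:E = \int[P]_(w in A) (Y w)%:E)%E].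

(* E[X | F] <= Y for nonnegative X and F-measurable Y >= 0 *)
Definition cexp_le (P : probability Omega R) (F : set (set Omega)) (X Y : Omega -> R) : Prop :=
  Fmeas F Y /\
  forall A, F A -> (\int[P]_(w in A) (X w)%:E <= \int[P]_(w in A) (Y w)%:E)%E.

Definition Ex (P : probability Omega R) (X : Omega -> R) : \bar R :=
  (\int[P]_w (X w)%:E)%E.

End Prob.

(* Main.v *)
Require Import Defs.
From HB Require Import structures.
From mathcomp Require Import all_boot all_order all_algebra.
From mathcomp Require Import all_classical all_reals all_analysis.
From mathcomp Require Import measurable_realfun.
From mathcomp Require Import ring lra.
Import Order.TTheory GRing.Theory Num.Theory.
Import numFieldNormedType.Exports.
Local Open Scope classical_set_scope.
Local Open Scope ring_scope.

Set Implicit Arguments. Unset Strict Implicit. Unset Printing Implicit Defensive.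
Section MeasA.
Context {dO : measure_display} {Omega : measurableType dO}.

Lemma meas_forall_fin (I : finType) (S : I -> set Omega) :
  (forall i, measurable (S i)) -> measurable [set w | forall i, S i w].
Proof.
move=> mS.
suff H : forall s : seq I, measurable [set w | forall i, i \in s -> S i w].
  have -> : [set w | forall i, S i w] = [set w | forall i, i \in enum I -> S i w].
    by apply/seteqP; split=> w /= h i; [move=> _; exact: h| apply: h; rewrite mem_enum].
  exact: H.
elim=> [|a s IH].
  have -> : [set w | forall i, i \in [::] -> S i w] = setT by apply/seteqP; split=> w //=.
  exact: measurableT.
have -> : [set w | forall i, i \in a :: s -> S i w] = S a `&` [set w | forall i, i \in s -> S i w].
  apply/seteqP; split=> w /=.
    by move=> h; split; [apply: h; rewrite inE eqxx | move=> i iS; apply: h; rewrite inE iS orbT].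
  by move=> [Sa h] i; rewrite inE => /orP[/eqP->//|/h].
exact: measurableI.
Qed.
End MeasA.
Section MeasB.
Context {R : realType} {dO : measure_display} {Omega : measurableType dO}.

Lemma meas_open_preimage n (phi : Omega -> 'rV[R]_n) (V : set 'rV[R]_n) :
  (forall l, measurable_fun setT (fun w => phi w 0 l)) -> open V -> measurable (phi @^-1` V).
Proof.
move=> mphi oV.
pose box (q : {ffun 'I_n -> rat} * {ffun 'I_n -> rat}) :=
  [set z : 'rV[R]_n | forall l, ratr (q.1 l) < z 0 l < ratr (q.2 l)].
have -> : phi @^-1` V = \bigcup_(q in setT) [set w | box q `<=` V /\ box q (phi w)].
  apply/seteqP; split=> w /=; last by move=> [q _ [bV /bV]].
  move=> Vw.
  have := oV _ Vw => /nbhs_ballP [e e0 beV].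
  have [a ha] : exists a : 'I_n -> rat, forall l, ratr (a l) \in `](phi w 0 l - e), phi w 0 l[.
    apply: (@fin_all_exists _ (fun _ => rat) (fun l (q : rat) => ratr q \in `](phi w 0 l - e), phi w 0 l[)) => l; apply: rat_in_itvoo; by rewrite ltrBlDr ltrDl.
  have [b hb] : exists b : 'I_n -> rat, forall l, ratr (b l) \in `](phi w 0 l), phi w 0 l + e[.
    apply: (@fin_all_exists _ (fun _ => rat) (fun l (q : rat) => ratr q \in `](phi w 0 l), phi w 0 l + e[)) => l; apply: rat_in_itvoo; by rewrite ltrDl.
  exists ([ffun l => a l], [ffun l => b l]) => //; split.
    move=> z /= hz; apply: beV.
    have hz2 : forall l, `|phi w 0 l - z 0 l| < e.
      move=> l; move: (hz l) (ha l) (hb l); rewrite !ffunE !in_itv /= => /andP[h1 h2] /andP[h3 h4] /andP[h5 h6].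
      rewrite ltr_norml; apply/andP; split; [move: h2 h5 h3; lra | move: h1 h3 h4; lra].
    split; first done. move=> i j; rewrite (ord1 i) -ball_normE /ball_ /=; exact: hz2.
  move=> l /=; rewrite !ffunE.
  move: (ha l) (hb l); rewrite !in_itv /= => /andP[_ ->] /andP[-> _] //.
apply: countable_bigcupT_measurable; first exact: countableP.
move=> q; case: (pselect (box q `<=` V)) => bV.
  have -> : [set w | box q `<=` V /\ box q (phi w)] =
     [set w | forall l, (fun l => setT `&` ((fun w => phi w 0 l) @^-1` `](ratr (q.1 l)), (ratr (q.2 l))[)) l w].
    apply/seteqP; split=> w /=.
      by move=> [_ h] l; split=> //; rewrite /= in_itv /=; exact: h.
    by move=> h; split=> // l; have [_ /=] := h l; rewrite in_itv.
  apply: meas_forall_fin => l; apply: mphi => //; exact: measurable_itv.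
have -> : [set w | box q `<=` V /\ box q (phi w)] = set0.
  by apply/seteqP; split=> w //= [].
exact: measurable0.
Qed.

Lemma meas_cont_comp n (phi : Omega -> 'rV[R]_n) (f : 'rV[R]_n -> R) :
  (forall l, measurable_fun setT (fun w => phi w 0 l)) -> continuous f ->
  measurable_fun setT (f \o phi).
Proof.
move=> mphi /continuousP cf; apply: (measurability _ (measurable_realfun.RGenOpens.measurableE R)).
move=> _ [_ [a [b ->]] <-]; rewrite setTI comp_preimage.
apply: meas_open_preimage => //; exact/cf/interval_open.
Qed.
End MeasB.

Section MVI.
Context {R : realType}.

Lemma cvg_bigsum {T} (F : set_system T) {FF : Filter F} (I : Type) (r : seq I)
  (f : I -> T -> R) (a : I -> R) :
  (forall i, f i @ F --> a i) -> (fun x => \sum_(i <- r) f i x) @ F --> \sum_(i <- r) a i.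
Proof.
move=> h; elim: r => [|i r IH].
  under eq_fun do rewrite big_nil.
  rewrite big_nil; exact: cvg_cst.
under eq_fun do rewrite big_cons.
rewrite big_cons; exact: cvgD.
Qed.

Lemma psi_deriv n m e (H : 'rV[R]_n -> 'M[R]_(m,e)) (u : 'M[R]_(m,e)) (x h : 'rV[R]_n) (s : R) :
  differentiable H (x + s *: h) ->
  is_derive s 1 (fun s => \sum_i \sum_j u i j * H (x + s *: h) i j)
     (\sum_i \sum_j u i j * ('D_h H (x + s *: h)) i j).
Proof.
move=> dH.
have dHh := @diff_derivable _ _ _ _ _ h dH.
set p := x + s *: h.
have cq : (fun t : R => t^-1 *: ((H \o shift p) (t *: h) - H p)) @ 0^' --> 'D_h H p.
  exact: dHh.
set psi := (fun s => _).
have key : (fun t : R => t^-1 *: ((psi \o shift s) (t *: 1) - psi s)) =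
   fun t => \sum_i \sum_j u i j * (t^-1 *: ((H \o shift p) (t *: h) - H p)) i j.
  apply: funext => t; rewrite /psi /= /p.
  have -> : x + (t *: 1 + s) *: h = t *: h + (x + s *: h).
    by rewrite scalerDl [t *: 1]mulr1 addrCA.
  rewrite -sumrB /GRing.scale /=. rewrite mulr_sumr; apply: eq_bigr => i _.
  rewrite -sumrB mulr_sumr; apply: eq_bigr => j _.
  rewrite !mxE; ring.
have c2 : (fun t : R => \sum_i \sum_j u i j * (t^-1 *: ((H \o shift p) (t *: h) - H p)) i j)
     @ 0^' --> \sum_i \sum_j u i j * ('D_h H p) i j.
  apply: cvg_bigsum => i; apply: cvg_bigsum => j.
  apply: cvgM; first exact: cvg_cst.
  have cc := @coord_continuous R m e i j ('D_h H p).
  exact: (cvg_comp _ _ cq cc).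
apply: DeriveDef.
  by rewrite /derivable key; exact: cvgP c2.
by rewrite /derive key; exact: cvg_lim c2.
Qed.


Lemma CS (I : finType) (a b : I -> R) :
  (\sum_i a i * b i) ^+ 2 <= (\sum_i a i ^+ 2) * (\sum_i b i ^+ 2).
Proof.
set A := \sum_i a i ^+ 2; set B := \sum_i b i ^+ 2; set C := \sum_i a i * b i.
have hexp t : \sum_i (a i * t - b i) ^+ 2 = t ^+ 2 * A - 2 * t * C + B.
  rewrite /A /B /C !mulr_sumr -sumrB -big_split /=; apply: eq_bigr => i _; ring.
have A0 : 0 <= A by apply: sumr_ge0 => i _; exact: sqr_ge0.
have B0 : 0 <= B by apply: sumr_ge0 => i _; exact: sqr_ge0.
have [A0e|An0] := eqVneq A 0.
  have a0 i : a i = 0.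
    apply/eqP; rewrite -sqrf_eq0; apply/eqP.
    exact: (@psumr_eq0P _ _ predT (fun i => a i ^+ 2) (fun i _ => sqr_ge0 (a i)) A0e i isT).
  have -> : C = 0 by rewrite /C big1 // => i _; rewrite a0 mul0r.
  by rewrite A0e expr0n mul0r.
have Ap : 0 < A by rewrite lt_def An0 A0.
have := hexp (C / A).
have h0 : 0 <= \sum_i (a i * (C / A) - b i) ^+ 2 by apply: sumr_ge0 => i _; exact: sqr_ge0.
move=> e; rewrite e in h0.
have : 0 <= A * ((C / A) ^+ 2 * A - 2 * (C / A) * C + B) by apply: mulr_ge0.
have -> : A * ((C / A) ^+ 2 * A - 2 * (C / A) * C + B) = A * B - C ^+ 2.
  by field; rewrite An0.
by rewrite subr_ge0.
Qed.


Lemma fro2_ge0 m n (A : 'M[R]_(m, n)) : 0 <= fro2 A.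
Proof. by apply: sumr_ge0 => i _; apply: sumr_ge0 => j _; exact: sqr_ge0. Qed.

Lemma mvi n m e (H : 'rV[R]_n -> 'M[R]_(m,e)) (Hb : R) :
  (forall x, differentiable H x) -> (forall x, jac_norm H x <= Hb) ->
  forall x y, fro2 (H y - H x) <= Hb ^+ 2 * fro2 (y - x).
Proof.
move=> dH jH x y.
set u := H y - H x; set h := y - x.
pose psi := fun s : R => \sum_i \sum_j u i j * H (x + s *: h) i j.
pose dpsi := fun s : R => \sum_i \sum_j u i j * ('D_h H (x + s *: h)) i j.
have hd (s : R) : is_derive s (1:R) psi (dpsi s) := @psi_deriv _ _ _ H u x h s (dH _).
have [c _ hc] : exists2 c, c \in `]0, 1[ & psi 1 - psi 0 = dpsi c * (1 - 0).
  apply: (MVT ltr01 (fun s _ => hd s)).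
  apply: derivable_within_continuous => s _; exact: (@ex_derive _ _ _ _ _ _ _ (hd s)).
have e1 : psi 1 - psi 0 = fro2 u.
  rewrite /psi scale1r scale0r addr0.
  have -> : x + h = y by rewrite /h addrC subrK.
  rewrite -sumrB /fro2; apply: eq_bigr => i _; rewrite -sumrB; apply: eq_bigr => j _.
  rewrite /u !mxE; ring.
rewrite e1 subr0 mulr1 in hc.
set p := x + c *: h in hc.
set a := fun (i : 'I_m) (j : 'I_e) (l : 'I_n) => ('D_(@evec R n l) H p) i j.
have lin i j : ('D_h H p) i j = \sum_l h 0 l * a i j l.
  rewrite deriveE //.
  have -> : 'd H p h = 'd H p (\sum_l h 0 l *: delta_mx 0 l) by rewrite -row_sum_delta.
  rewrite linear_sum summxE; apply: eq_bigr => l _.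
  by rewrite linearZ mxE /a deriveE.
set J2 := \sum_i \sum_j \sum_l a i j l ^+ 2.
have hJ : J2 <= Hb ^+ 2.
  have := jH p; rewrite /jac_norm -/a -/J2 => hs.
  have J20 : 0 <= J2.
    by apply: sumr_ge0 => i _; apply: sumr_ge0 => j _; apply: sumr_ge0 => l _; exact: sqr_ge0.
  have s0 := sqrtr_ge0 J2.
  rewrite -(sqr_sqrtr J20); nra.
have fh : fro2 h = \sum_l h 0 l ^+ 2 by rewrite /fro2 big_ord1.
have hD : \sum_i \sum_j ('D_h H p) i j ^+ 2 <= fro2 h * J2.
  rewrite /J2 mulr_sumr; apply: ler_sum => i _; rewrite mulr_sumr; apply: ler_sum => j _.
  rewrite lin fh; exact: CS.
have hCS : (dpsi c) ^+ 2 <= fro2 u * \sum_i \sum_j ('D_h H p) i j ^+ 2.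
  rewrite /dpsi -/p /fro2 !pair_big /=.
  exact: (CS (fun q : 'I_m * 'I_e => u q.1 q.2) (fun q => ('D_h H p) q.1 q.2)).
rewrite -hc in hCS.
have U0 := fro2_ge0 u; have h0 := fro2_ge0 h.
have [U00|Up] := eqVneq (fro2 u) 0.
  by rewrite U00; apply: mulr_ge0 => //; exact: sqr_ge0.
have Upos : 0 < fro2 u by rewrite lt_def Up U0.
have : fro2 u <= fro2 h * J2.
  rewrite -(ler_pM2l Upos) -expr2; apply: (le_trans hCS).
  by rewrite ler_pM2l.
move=> h1; apply: (le_trans h1); rewrite [Hb ^+ 2 * _]mulrC. move: h0 hJ; set F := fro2 _; set Q := Hb ^+ 2; nra.
Qed.

End MVI.

Section Tower.
Context {R : realType} {dO : measure_display} {Omega : measurableType dO}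
  (P : probability Omega R).
Variable F : set (set Omega).
Hypothesis FI : forall A B, F A -> F B -> F (A `&` B).
Hypothesis Fm : forall A, F A -> measurable A.

Lemma Fmeas_meas (Z : Omega -> R) : Fmeas F Z -> measurable_fun setT Z.
Proof. by move=> hZ _ B mB; rewrite setTI; exact: Fm (hZ B mB). Qed.

Lemma bnd_of {T : Type} (f : T -> R) (B : R) :
  (forall x, `|f x| <= B) -> [bounded f x | x in setT].
Proof.
move=> h; exists B; split; first exact: num_real.
by move=> N BN x _ /=; exact: le_trans (h x) (ltW BN).
Qed.

Lemma int_restr (A : set Omega) (f : Omega -> R) :
  (\int[P]_(w in A) (f w)%:E = \int[P]_w (\1_A w * f w)%:E)%E.
Proof.
rewrite integral_mkcond; apply: eq_integral => w _.
by rewrite /restrict /patch indicE; case: (w \in A); rewrite ?mul1r ?mul0r.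
Qed.

Lemma int_fin (f : Omega -> R) :
  P.-integrable setT (EFin \o f) ->
  (\int[P]_w (f w)%:E = (\int[P]_w f w)%:E)%E.
Proof. by move=> hf; rewrite /Rintegral fineK //; exact: integrable_fin_num. Qed.

Lemma integrable_bndM (h f : Omega -> R) (B : R) :
  measurable_fun setT h -> (forall w, `|h w| <= B) ->
  P.-integrable setT (EFin \o f) -> P.-integrable setT (EFin \o (fun w => h w * f w)).
Proof.
move=> mh hb iF.
have := integrableMr measurableT mh (bnd_of hb) iF.
by congr (P.-integrable _ _); apply/funext => w /=; rewrite EFinM.
Qed.

Lemma tower (Z D : Omega -> R) (A : set Omega) (M : R) :
  Fmeas F Z -> P.-integrable setT (EFin \o D) ->
  (forall B, F B -> \int[P]_(w in B) (D w)%:E = 0)%E ->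
  F A -> (forall w, A w -> `|Z w| <= M) ->
  (\int[P]_(w in A) (Z w * D w)%:E = 0)%E.
Proof.
move=> hZ iD hD FA hM.
have mZ := Fmeas_meas hZ.
have mD : measurable_fun setT D by apply/measurable_EFinP; exact: measurable_int iD.
have mA := Fm FA.
set M' := `|M|.
have M'0 : 0 <= M' := normr_ge0 M.
pose g w := \1_A w * Z w.
have mI : measurable_fun setT (\1_A : Omega -> R) by exact: measurable_indic.
have mg : measurable_fun setT g := measurable_funM mI mZ.
have gb w : `|g w| <= M'.
  rewrite /g indicE; case: (boolP (w \in A)) => [/set_mem Aw|_]; last by rewrite mul0r normr0.
  by rewrite mul1r (le_trans (hM _ Aw)) // ler_norm.
have ig : P.-integrable setT (EFin \o (fun w => g w * D w)) := integrable_bndM mg gb iD.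
rewrite int_restr.
under eq_integral do rewrite mulrA -/(g _).
rewrite int_fin //.
set r := Rintegral _ _ _.
suff -> : r = 0 by [].
set K := Rintegral P setT (fun w => `|D w|).
have K0 : 0 <= K by apply: Rintegral_ge0 => w _.
have iDn := integrable_norm iD.
suff hK : forall m : nat, `|r| <= K / m.+1%:R.
  apply/eqP; apply/negPn/negP => rn0.
  have rp : 0 < `|r| by rewrite normr_gt0.
  set m := Num.truncn (K / `|r|).
  have := truncnS_gt (K / `|r|); rewrite -/m => h1.
  have := hK m; rewrite ler_pdivlMr // => h2.
  move: h1; rewrite ltr_pdivrMr // mulrC => h1.
  by move: (lt_le_trans h1 h2); rewrite ltxx.
move=> m.
set delta := (m.+1%:R : R)^-1.
have d0 : 0 < delta by rewrite invr_gt0.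
set L := (Num.truncn (2 * M' * m.+1%:R)).+1.
pose c (i : 'I_L) := - M' + i%:R * delta.
pose S (i : 'I_L) := A `&` Z @^-1` `[c i, c i + delta[.
have FS i : F (S i) by apply: FI => //; apply: hZ; exact: measurable_itv.
pose h w := \sum_(i < L) c i * \1_(S i) w.
have mh : measurable_fun setT h.
  apply: measurable_sum => i; apply: measurable_funM; first exact: measurable_cst.
  exact/measurable_indic/Fm.
have hb w : `|h w| <= \sum_(i < L) `|c i|.
  apply: (le_trans (ler_norm_sum _ _ _)); apply: ler_sum => i _.
  rewrite normrM indicE; case: (_ \in _); by rewrite ?normr1 ?normr0 ?mulr1 ?mulr0.
set k : R := m.+1%:R.
have kp : 0 < k by rewrite /k ltr0n.
have c1 w : `|g w - h w| <= delta.
  rewrite /g /h indicE; case: (boolP (w \in A)) => [/set_mem Aw|nA]; last first.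
    rewrite big1 ?mul0r ?subrr ?normr0 ?(ltW d0) // => i _.
    rewrite indicE; case: (boolP (w \in S i)) => [/set_mem [Aw _]|_]; last by rewrite mulr0.
    by move: nA; rewrite (mem_set Aw).
  have hZw := hM _ Aw.
  have hZw' : `|Z w| <= M' by apply: (le_trans hZw); exact: ler_norm.
  move: hZw'; rewrite ler_norml => /andP[hZ1 hZ2].
  set x := (Z w + M') * k.
  have x0 : 0 <= x by apply: mulr_ge0; [lra | exact: ltW].
  have i0L : (Num.truncn x < L)%N.
    rewrite ltnS; apply: le_truncn; rewrite /x; apply: ler_wpM2r; [exact: ltW | lra].
  pose i0 : 'I_L := Ordinal i0L.
  have key (i : 'I_L) : (c i <= Z w < c i + delta) = (Num.truncn x == i).
    rewrite truncn_eq // /c /delta.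
    have -> : (- M' + i%:R * k^-1 <= Z w) = (i%:R <= x).
      by rewrite addrC lerBlDr -ler_pdivrMr.
    have -> : (Z w < - M' + i%:R * k^-1 + k^-1) = (x < i.+1%:R).
      have -> : - M' + i%:R * k^-1 + k^-1 = i.+1%:R * k^-1 - M'.
        by rewrite -natr1 mulrDl mul1r; ring.
      by rewrite ltrBrDr ltr_pdivlMr.
    by [].
  have memS i : (w \in S i) = (i == i0).
    apply/idP/idP => [/set_mem [_ /= hi]|/eqP ->].
      have : c i <= Z w < c i + delta by move: hi; rewrite in_itv.
      by rewrite key => /eqP hi2; apply/eqP/val_inj; rewrite /= hi2.
    apply/mem_set; split => //=; rewrite in_itv /= key; exact/eqP.
  rewrite mul1r (bigD1 i0) //= big1 => [|i /negbTE ne]; last by rewrite indicE memS ne mulr0.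
  rewrite indicE memS eqxx mulr1 addr0.
  have := key i0; rewrite eqxx => /andP[hl hr].
  rewrite ler_norml; apply/andP; split; lra.
have iSD i : P.-integrable setT (EFin \o (fun w => \1_(S i) w * D w)).
  apply: (integrable_bndM (B := 1)) => //; first exact/measurable_indic/Fm.
  by move=> w; rewrite indicE; case: (_ \in _); rewrite ?normr1 ?normr0.
have c2 : (\int[P]_w (h w * D w)%:E = 0)%E.
  have eqh w : (h w * D w)%:E = (\sum_(i < L) ((c i)%:E * (\1_(S i) w * D w)%:E))%E.
    by rewrite /h mulr_suml -sumEFin; apply: eq_bigr => i _; rewrite -mulrA EFinM.
  under eq_integral => w _ do rewrite eqh.
  have iT i : P.-integrable setT (fun w => ((c i)%:E * (\1_(S i) w * D w)%:E)%E).
    exact: (integrableZl measurableT (c i) (iSD i)).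
  rewrite (integral_sum measurableT iT).
  apply: big1 => i _; rewrite integralZl //; last exact: iSD i.
  have e0 := int_restr (S i) D; rewrite hD // in e0.
  by rewrite -e0 mule0.
have igh : P.-integrable setT (EFin \o (fun w => (g w - h w) * D w)).
  exact: integrable_bndM (measurable_funB mg mh) c1 iD.
have ih : P.-integrable setT (EFin \o (fun w => h w * D w)) := integrable_bndM mh hb iD.
have er : r = Rintegral P setT (fun w => (g w - h w) * D w).
  have : r = Rintegral P setT (fun w => (g w - h w) * D w + h w * D w).
    by apply: eq_Rintegral => w _; ring.
  rewrite RintegralD // => ->.
  by rewrite /Rintegral [X in _ + fine X]c2 addr0.
rewrite er.
apply: (le_trans (le_normr_Rintegral measurableT igh)).
have idD : P.-integrable setT (EFin \o (fun w => delta * `|D w|)).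
  apply: (@integrable_bndM (fun _ => delta) (Num.Def.normr \o D) delta) iDn => //; try exact: measurable_cst.
  by move=> w; rewrite ger0_norm // ltW.
apply: (le_trans (le_Rintegral measurableT (integrable_norm igh) idD _)).
  by move=> w _ /=; rewrite normrM; apply: ler_wpM2r => //.
by rewrite RintegralZl // mulrC.
Qed.


Lemma integrable_bnd (h : Omega -> R) (B : R) :
  measurable_fun setT h -> (forall w, `|h w| <= B) -> P.-integrable setT (EFin \o h).
Proof.
move=> mh hb.
have := integrable_bndM mh hb (finite_measure_integrable_cst P 1 measurableT).
by congr (P.-integrable _ _); apply/funext => w /=; rewrite mulr1.
Qed.

Lemma var_bound (I : finType) (gt g : I -> Omega -> R) (s2 : R) :
  (forall S : I -> set Omega, (forall p, F (S p)) -> F [set w | forall p, S p w]) ->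
  0 <= s2 ->
  (forall p, cexp_eq P F (gt p) (g p)) ->
  cexp_le P F (fun w => \sum_p (gt p w - g p w) ^+ 2) (fun _ => s2) ->
  (Ex P (fun w => (\sum_p gt p w ^+ 2)%R) <= Ex P (fun w => (\sum_p g p w ^+ 2)%R) + s2%:E)%E.
Proof.
move=> Fall s20 hE [_ hV].
have igt p : P.-integrable setT (EFin \o gt p) by case: (hE p).
have ig p : P.-integrable setT (EFin \o g p) by case: (hE p).
have Fg p : Fmeas F (g p) by case: (hE p).
have hI p : forall A, F A -> (\int[P]_(w in A) (gt p w)%:E = \int[P]_(w in A) (g p w)%:E)%E.
  by case: (hE p).
pose Dp p w := gt p w - g p w.
have mg p : measurable_fun setT (g p) := Fmeas_meas (Fg p).
have mgt p : measurable_fun setT (gt p).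
  by apply/measurable_EFinP; exact: measurable_int (igt p).
have iD p : P.-integrable setT (EFin \o Dp p).
  have := integrableB measurableT (igt p) (ig p).
  by congr (P.-integrable _ _); apply/funext => w /=; rewrite EFinB.
have mD p : measurable_fun setT (Dp p) := measurable_funB (mgt p) (mg p).
have hD p : forall B, F B -> (\int[P]_(w in B) (Dp p w)%:E = 0)%E.
  move=> B FB; have mB := Fm FB.
  under eq_integral do rewrite EFinB.
  rewrite integralB_EFin //; last 2 first.
    - exact: (integrableS measurableT mB (@subsetT _ _) (igt p)).
    - exact: (integrableS measurableT mB (@subsetT _ _) (ig p)).
  rewrite hI // subee //.
  by have := integrable_fin_num mB (integrableS measurableT mB (@subsetT _ _) (ig p)).
pose S w := \sum_p gt p w ^+ 2.
pose Sg w := \sum_p g p w ^+ 2.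
pose SD w := \sum_p Dp p w ^+ 2.
have mS : measurable_fun setT S.
  by apply: measurable_sum => p; exact: measurable_funX.
have mSg : measurable_fun setT Sg.
  by apply: measurable_sum => p; exact: measurable_funX.
have mSD : measurable_fun setT SD.
  by apply: measurable_sum => p; exact: measurable_funX.
have S0 w : 0 <= S w by apply: sumr_ge0 => p _; exact: sqr_ge0.
have Sg0 w : 0 <= Sg w by apply: sumr_ge0 => p _; exact: sqr_ge0.
have SD0 w : 0 <= SD w by apply: sumr_ge0 => p _; exact: sqr_ge0.
pose A (n : nat) := [set w | forall p, g p w \in `[- n%:R, n%:R]].
have FA n : F (A n).
  by apply: (Fall (fun p => g p @^-1` `[- n%:R, n%:R])) => p; apply: Fg; exact: measurable_itv.
have Ab n w p : A n w -> `|g p w| <= n%:R.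
  by move=> /(_ p); rewrite in_itv /= ler_norml.
have bound n : (\int[P]_(w in A n) (S w)%:E <= Ex P Sg + s2%:E)%E.
  have mA := Fm (FA n).
  set i := \1_(A n) : Omega -> R.
  have mi : measurable_fun setT i by exact: measurable_indic.
  have ib w : `|i w| <= 1 by rewrite /i indicE; case: (_ \in _); rewrite ?normr1 ?normr0.
  have i0 w : 0 <= i w by rewrite /i indicE.
  have iSg : P.-integrable setT (EFin \o (fun w => i w * Sg w)).
    apply: (integrable_bnd (B := \sum_(p : I) n%:R ^+ 2)); first exact: measurable_funM.
    move=> w; rewrite /i indicE; case: (boolP (w \in A n)) => [/set_mem Aw|_].
      rewrite mul1r ger0_norm //; apply: ler_sum => p _.
      have := Ab n w p Aw; rewrite ler_norml => /andP[h1 h2]; nra.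
    by rewrite mul0r normr0; apply: sumr_ge0 => p _; exact: sqr_ge0.
  have eSD : (\int[P]_w (i w * SD w)%:E <= s2%:E)%E.
    rewrite -int_restr; apply: (le_trans (hV _ (FA n))).
    rewrite integral_cst //; apply: (le_trans (lee_wpmul2l _ (probability_le1 P mA))).
      by rewrite lee_fin.
    by rewrite mule1.
  have iSD : P.-integrable setT (EFin \o (fun w => i w * SD w)).
    apply/integrableP; split; first exact/measurable_EFinP/measurable_funM.
    under eq_integral do rewrite /= ger0_norm ?mulr_ge0 //.
    exact: (le_lt_trans eSD (ltry _)).
  have igD p : P.-integrable setT (EFin \o (fun w => (i w * g p w) * Dp p w)).
    apply: (integrable_bndM (B := n%:R)) (iD p); first exact: measurable_funM.
    move=> w; rewrite /i indicE; case: (boolP (w \in A n)) => [/set_mem Aw|_].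
      by rewrite mul1r; exact: Ab.
    by rewrite mul0r normr0.
  have iG : P.-integrable setT (fun w => (\sum_p (2 * ((i w * g p w) * Dp p w))%:E)%E).
    apply: (integrable_sum measurableT) => p.
    have h2 := integrableZl measurableT 2 (igD p).
    move=> _; apply: (eq_integrable measurableT _ _ _ h2) => w _ /=.
    by rewrite EFinM.
  rewrite int_restr.
  have ept w : ((i w * S w)%:E = (i w * Sg w)%:E + (i w * SD w)%:E
      + \sum_p (2 * ((i w * g p w) * Dp p w))%:E)%E.
    rewrite sumEFin -!EFinD; congr EFin.
    rewrite /S /Sg /SD /Dp !mulr_sumr -!big_split /=; apply: eq_bigr => p _; ring.
  under eq_integral do rewrite ept.
  rewrite integralD //; last exact: integrableD.
  rewrite integralD //.
  rewrite integral_sum //.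
  rewrite big1 ?adde0; last first.
    move=> p _.
    have -> : (\int[P]_w (2 * ((i w * g p w) * Dp p w))%:E =
               2%:E * \int[P]_w ((i w * g p w) * Dp p w)%:E)%E.
      rewrite -integralZl //; last exact: igD.
    have -> : (\int[P]_w ((i w * g p w) * Dp p w)%:E =
               \int[P]_(w in A n) (g p w * Dp p w)%:E)%E.
      by rewrite (int_restr (A n)); apply: eq_integral => w _; rewrite mulrA.
    by rewrite (tower (M := n%:R) (Fg p) (iD p) (hD p) (FA n) (Ab n ^~ p)) mule0.
  apply: leeD => //.
  rewrite -int_restr; apply: ge0_subset_integral => //.
    exact/measurable_EFinP.
  by move=> w _; rewrite lee_fin.
  move=> p; have h2 := integrableZl measurableT 2 (igD p).
  by apply: (eq_integrable measurableT _ _ _ h2) => w _ /=; rewrite EFinM.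
have ndA n m : (n <= m)%N -> A n `<=` A m.
  move=> nm w /= h p; move: (h p); rewrite !in_itv /= => /andP[h1 h2].
  have : (n%:R : R) <= m%:R by rewrite ler_nat.
  move=> hnm; apply/andP; split; lra.
pose gs n w := ((\1_(A n) w : R) * S w)%:E.
have mgs n : measurable_fun setT (gs n).
  apply/measurable_EFinP; apply: measurable_funM => //.
  exact/measurable_indic/Fm/FA.
have gs0 n w : (0 <= gs n w)%E by rewrite /gs lee_fin mulr_ge0 // indicE.
have nd w : {homo gs ^~ w : n m / (n <= m)%N >-> (n <= m)%E}.
  move=> n m nm; rewrite /gs lee_fin !indicE.
  case: (boolP (w \in A n)) => [/set_mem /(ndA _ _ nm) /mem_set -> //|_].
  by rewrite mul0r mulr_ge0 // ler0n.
have limw w : limn (gs ^~ w) = (S w)%:E.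
  apply: cvg_lim => //; apply: cvg_near_cst.
  exists (Num.truncn (\sum_p `|g p w|)).+1 => // m /= Nm.
  rewrite /gs indicE mem_set ?mul1r // => p.
  rewrite in_itv /= -ler_norml.
  have h1 : `|g p w| <= \sum_q `|g q w|.
    by rewrite (bigD1 p) //= lerDl; apply: sumr_ge0.
  apply: (le_trans h1); apply: ltW; apply: (lt_le_trans (truncnS_gt _)).
  by rewrite ler_nat.
have mc := monotone_convergence P measurableT mgs (fun n w _ => gs0 n w) (fun w _ => nd w).
rewrite (_ : (fun x => limn (gs^~ x)) = fun x => (S x)%:E) in mc; last first.
  by apply/funext => w; exact: limw.
rewrite /Ex mc.
apply: lime_le.
  apply: cvgP.
  exact: (cvg_monotone_convergence measurableT mgs (fun n w _ => gs0 n w) (fun w _ => nd w)).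
apply: nearW => n.
have e : (\int[P]_x gs n x = \int[P]_(w in A n) (S w)%:E)%E by rewrite (int_restr (A n)).
rewrite e; exact: bound.
Qed.

End Tower.

Section Helpers.
Context {R : realType}.

Lemma fro2N m n (A : 'M[R]_(m,n)) : fro2 (- A) = fro2 A.
Proof. by apply: eq_bigr => i _; apply: eq_bigr => j _; rewrite mxE sqrrN. Qed.

Lemma fro2Z m n (c : R) (A : 'M[R]_(m,n)) : fro2 (c *: A) = c ^+ 2 * fro2 A.
Proof.
rewrite /fro2 mulr_sumr; apply: eq_bigr => i _; rewrite mulr_sumr.
by apply: eq_bigr => j _; rewrite mxE exprMn.
Qed.

Lemma young (a b eps : R) : 0 < eps ->
  (a + b) ^+ 2 <= (1 + eps) * b ^+ 2 + (1 + eps^-1) * a ^+ 2.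
Proof.
move=> e0; rewrite -subr_ge0.
have -> : (1 + eps) * b ^+ 2 + (1 + eps^-1) * a ^+ 2 - (a + b) ^+ 2 =
          (eps * b - a) ^+ 2 / eps.
  by field; rewrite gt_eqF.
by apply: divr_ge0; [exact: sqr_ge0 | exact: ltW].
Qed.

Lemma fro2_young m n (a b : 'M[R]_(m,n)) eps : 0 < eps ->
  fro2 (a + b) <= (1 + eps) * fro2 b + (1 + eps^-1) * fro2 a.
Proof.
move=> e0; rewrite /fro2 !mulr_sumr -big_split /=; apply: ler_sum => i _.
rewrite !mulr_sumr -big_split /=; apply: ler_sum => j _.
by rewrite mxE; exact: young.
Qed.

Context {dO : measure_display} {Omega : measurableType dO}.

Lemma meas_entry_H n m e (H : 'rV[R]_n -> 'M[R]_(m,e)) (phi : Omega -> 'rV[R]_n) i j :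
  (forall v, differentiable H v) -> (forall l, measurable_fun setT (fun w => phi w 0 l)) ->
  measurable_fun setT (fun w => H (phi w) i j).
Proof.
move=> dH mphi.
have hc : continuous (fun v => H v i j).
  move=> v.
  exact: (continuous_comp (differentiable_continuous (dH v)) (@coord_continuous R m e i j (H v))).
exact: (meas_cont_comp (f := fun v => H v i j) mphi hc).
Qed.

Lemma meas_fro2 m n (M : Omega -> 'M[R]_(m,n)) :
  (forall i j, measurable_fun setT (fun w => M w i j)) -> measurable_fun setT (fun w => fro2 (M w)).
Proof.
move=> hM; rewrite /fro2; apply: measurable_sum => i; apply: measurable_sum => j.
exact: measurable_funX.
Qed.

Lemma meas_entryB m n (M1 M2 : Omega -> 'M[R]_(m,n)) i j :
  measurable_fun setT (fun w => M1 w i j) -> measurable_fun setT (fun w => M2 w i j) ->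
  measurable_fun setT (fun w => (M1 w - M2 w) i j).
Proof.
move=> h1 h2.
have -> : (fun w => (M1 w - M2 w) i j) = (fun w => M1 w i j - M2 w i j).
  by apply: funext => w; rewrite !mxE.
exact: (measurable_funB h1 h2).
Qed.

Definition Gs (fs : set (Omega -> R)) : set (set Omega) :=
  [set A | exists f, fs f /\ exists B : set R, measurable B /\ A = f @^-1` B].

Lemma gen_by_meas (fs : set (Omega -> R)) :
  (forall f, fs f -> measurable_fun setT f) -> forall A, gen_by fs A -> measurable A.
Proof.
move=> hf A; apply: smallest_sub => //; first exact: sigma_algebra_measurable.
move=> _ [f [fsf [B [mB ->]]]]; rewrite -(setTI (f @^-1` B)); exact: (hf f fsf).
Qed.

Lemma gen_by_I (fs : set (Omega -> R)) A B :
  gen_by fs A -> gen_by fs B -> gen_by fs (A `&` B).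
Proof. exact: (@measurableI _ (g_sigma_algebraType (Gs fs)) A B). Qed.

Lemma gen_by_T (fs : set (Omega -> R)) : gen_by fs setT.
Proof. exact: (@measurableT _ (g_sigma_algebraType (Gs fs))). Qed.

Lemma gen_by_all (fs : set (Omega -> R)) (I : finType) (S : I -> set Omega) :
  (forall p, gen_by fs (S p)) -> gen_by fs [set w | forall p, S p w].
Proof. exact: (@meas_forall_fin _ (g_sigma_algebraType (Gs fs)) I S). Qed.

Lemma bnorm2_sig (K : nat) (d : 'I_K.+1 -> nat) (v : forall k, 'rV[R]_(d k)) :
  bnorm2 v = \sum_(p : {k : 'I_K.+1 & 'I_(d k)}) (v (tag p) 0 (tagged p)) ^+ 2.
Proof.
rewrite /bnorm2 /fro2.
under eq_bigr do rewrite big_ord1.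
exact: (@sig_big_dep _ 0 +%R 'I_K.+1 (fun k => 'I_(d k)) predT (fun _ => predT) (fun k (l : 'I_(d k)) => v k 0 l ^+ 2)).
Qed.

End Helpers.


Unset Implicit Arguments. Set Strict Implicit.

Theorem lemma2
  (R : realType) (K N : nat) (d E : 'I_K.+1 -> nat)
  (Hf : forall k : 'I_K.+1, 'rV[R]_(d k) -> 'M[R]_(N, E k))
  (Hb : R)
  (Phi : 'M[R]_(N, \sum_(k < K.+1) E k) -> R)
  (alpha eta sigma : R) (B T : nat)
  (dO : measure_display) (Omega : measurableType dO) (P : probability Omega R)
  (x : nat -> Omega -> forall k : 'I_K.+1, 'rV[R]_(d k))
  (G : nat -> Omega -> forall k : 'I_K.+1, 'M[R]_(N, E k))
  (gt : nat -> Omega -> forall k : 'I_K.+1, 'rV[R]_(d k))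
  (Cr : nat -> forall k : 'I_K.+1, Omega -> 'M[R]_(N, E k) -> 'M[R]_(N, E k)) :
  (1 <= K)%N -> (1 <= N)%N ->
  (* the maps H_k: differentiable with bounded derivative *)
  (forall k x0, differentiable (Hf k) x0) ->
  (forall k x0, jac_norm (Hf k) x0 <= Hb) ->
  (* Phi differentiable *)
  (forall Z, differentiable Phi Z) ->
  0 < alpha <= 1 -> 0 < eta -> (0 < B)%N -> 0 <= sigma ->
  (* the iterates are random variables *)
  (forall t k l, measurable_fun setT (fun w => x t w k 0 l)) ->
  (forall t k i j, measurable_fun setT (fun w => G t w k i j)) ->
  (forall t k l, measurable_fun setT (fun w => gt t w k 0 l)) ->
  (* EF-VFL recursion; Cr t k is the t-th (random) application of the compressor
     to block k (Cr 0 for G^0, Cr (t+1) for G^(t+1)) *)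
  (forall w k, G 0 w k = Cr 0%N k w (Hf k (x 0%N w k))) ->
  (forall t w k, x t.+1 w k = x t w k - eta *: gt t w k) ->
  (forall t w k, G t.+1 w k = G t w k + Cr t.+1 k w (Hf k (x t.+1 w k) - G t w k)) ->
  (* contractive compressor with fresh randomness at each application:
     E[ ||C(v) - v||^2 | everything available when C is applied ] <= (1-alpha) ||v||^2 *)
  (forall k,
     cexp_le P (gen_by [set f | exists k' l, f = fun w => x 0%N w k' 0 l])
       (fun w => fro2 (Cr 0%N k w (Hf k (x 0%N w k)) - Hf k (x 0%N w k)))
       (fun w => (1 - alpha) * fro2 (Hf k (x 0%N w k)))) ->
  (forall t k,
     cexp_le P
       (gen_by [set f | (exists s k' i j, (s <= t)%N /\ f = fun w => G s w k' i j)
                     \/ (exists s k' l, (1 <= s <= t.+1)%N /\ f = fun w => x s w k' 0 l)])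
       (fun w => fro2 (Cr t.+1 k w (Hf k (x t.+1 w k) - G t w k)
                       - (Hf k (x t.+1 w k) - G t w k)))
       (fun w => (1 - alpha) * fro2 (Hf k (x t.+1 w k) - G t w k))) ->
  (* unbiasedness and bounded variance of the mini-batch gradient, w.r.t.
     F_t = sigma(G^0, x^1, G^1, ..., x^t, G^t) *)
  (forall t, (t < T)%N -> forall k l,
     cexp_eq P
       (gen_by [set f | (exists s k' i j, (s <= t)%N /\ f = fun w => G s w k' i j)
                     \/ (exists s k' l', (1 <= s <= t)%N /\ f = fun w => x s w k' 0 l')])
       (fun w => gt t w k 0 l)
       (fun w => surr_grad Hf Phi (x t w) (G t w) k 0 l)) ->
  (forall t, (t < T)%N ->
     cexp_le P
       (gen_by [set f | (exists s k' i j, (s <= t)%N /\ f = fun w => G s w k' i j)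
                     \/ (exists s k' l', (1 <= s <= t)%N /\ f = fun w => x s w k' 0 l')])
       (fun w => bnorm2 (fun k => gt t w k - surr_grad Hf Phi (x t w) (G t w) k))
       (fun _ => sigma ^+ 2 / B%:R)) ->
  forall t, (t < T)%N -> forall eps : R, 0 < eps ->
  (Ex P (fun w => Dgap Hf (x t.+1 w) (G t.+1 w))
   <= ((1 - alpha) * (1 + eps))%:E * Ex P (fun w => Dgap Hf (x t w) (G t w))
      + ((1 - alpha) * (1 + eps^-1) * eta ^+ 2 * Hb ^+ 2)%:E
        * (Ex P (fun w => bnorm2 (fun k => surr_grad Hf Phi (x t w) (G t w) k))
           + (sigma ^+ 2 / B%:R)%:E))%E.
Proof.
move=> K1 N1 dH jH dPhi /andP[a0 a1] eta0 B0 sig0 mx mG mgt G0 xrec Grec Cc0 Cc Hunb Hvar t tT eps eps0.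
have mHx s k i j : measurable_fun setT (fun w => Hf k (x s w k) i j).
  exact: (meas_entry_H (phi := fun w => x s w k) i j (dH k) (mx s k)).
have mfroGH s s' k : measurable_fun setT (fun w => fro2 (G s w k - Hf k (x s' w k))).
  by apply: meas_fro2 => i j; apply: meas_entryB; [exact: mG | exact: mHx].
have mfroHG s s' k : measurable_fun setT (fun w => fro2 (Hf k (x s' w k) - G s w k)).
  by apply: meas_fro2 => i j; apply: meas_entryB; [exact: mHx | exact: mG].
have mbn : measurable_fun setT (fun w => bnorm2 (gt t w)).
  rewrite /bnorm2; apply: measurable_sum => k; apply: meas_fro2 => i j.
  by rewrite (ord1 i); exact: mgt.
have mDt : measurable_fun setT (fun w => Dgap Hf (x t w) (G t w)).
  by rewrite /Dgap; apply: measurable_sum => k; exact: mfroGH.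
have a1' : 0 <= 1 - alpha by lra.
set a := (1 - alpha) * (1 + eps).
set c := (1 - alpha) * (1 + eps^-1) * eta ^+ 2 * Hb ^+ 2.
have ie0 : 0 <= 1 + eps^-1 by rewrite addr_ge0 // invr_ge0 ltW.
have aa0 : 0 <= a by rewrite /a mulr_ge0 // addr_ge0 // ltW.
have c0 : 0 <= c by rewrite /c; apply: mulr_ge0; [apply: mulr_ge0; [exact: mulr_ge0|exact: sqr_ge0]|exact: sqr_ge0].
have step12 : (Ex P (fun w => Dgap Hf (x t.+1 w) (G t.+1 w)) <=
    \sum_k \int[P]_w ((1 - alpha) * fro2 (Hf k (x t.+1 w k) - G t w k))%:E)%E.
  rewrite /Ex /Dgap.
  under eq_integral do rewrite -sumEFin.
  rewrite ge0_integral_sum //; last 2 first.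
    - by move=> k; exact/measurable_EFinP/mfroGH.
    - by move=> k w _; rewrite lee_fin fro2_ge0.
  apply: lee_sum => k _.
  have := (Cc t k).2 setT (@gen_by_T R dO Omega _).
  have eqGH w : G t.+1 w k - Hf k (x t.+1 w k) =
      Cr t.+1 k w (Hf k (x t.+1 w k) - G t w k) - (Hf k (x t.+1 w k) - G t w k).
    by rewrite Grec opprB addrA (addrC (Cr _ _ _ _)).
  move=> hc; under eq_integral do rewrite eqGH.
  exact hc.
have Dg0 w : 0 <= Dgap Hf (x t w) (G t w).
  by apply: sumr_ge0 => k _; exact: fro2_ge0.
have bn0 w : 0 <= bnorm2 (gt t w).
  by apply: sumr_ge0 => k _; exact: fro2_ge0.
have step3 : (\sum_k \int[P]_w ((1 - alpha) * fro2 (Hf k (x t.+1 w k) - G t w k))%:E <=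
    \int[P]_w (a * Dgap Hf (x t w) (G t w) + c * bnorm2 (gt t w))%:E)%E.
  rewrite -ge0_integral_sum //; last 2 first.
    - move=> k; apply/measurable_EFinP; apply: measurable_funM; [exact: measurable_cst | exact: mfroHG].
    - by move=> k w _; rewrite lee_fin mulr_ge0 // fro2_ge0.
  have -> : (fun w => \sum_k ((1 - alpha) * fro2 (Hf k (x t.+1 w k) - G t w k))%:E) =
            EFin \o (fun w => \sum_k ((1 - alpha) * fro2 (Hf k (x t.+1 w k) - G t w k))).
    by apply: funext => w /=; rewrite sumEFin.
  apply: ge0_le_integral => //.
  - by move=> w _; rewrite lee_fin; apply: sumr_ge0 => k _; rewrite mulr_ge0 // fro2_ge0.
  - apply/measurable_EFinP; apply: measurable_sum => k.
    apply: measurable_funM; [exact: measurable_cst | exact: mfroHG].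
  - apply/measurable_EFinP; apply: measurable_funD; apply: measurable_funM => //; exact: measurable_cst.
  move=> w _; rewrite lee_fin /Dgap /bnorm2 !mulr_sumr -big_split /=; apply: ler_sum => k _.
  set x1 := x t.+1 w k; set x0 := x t w k.
  have e1 : Hf k x1 - G t w k = (Hf k x1 - Hf k x0) + (Hf k x0 - G t w k).
    by rewrite addrA subrK.
  have y := fro2_young (Hf k x1 - Hf k x0) (Hf k x0 - G t w k) eps0.
  rewrite -e1 in y.
  have mv := mvi (dH k) (jH k) x0 x1.
  have ex : x1 - x0 = - (eta *: gt t w k) by rewrite /x1 xrec addrC addKr.
  rewrite ex fro2N fro2Z in mv.
  have e2 : fro2 (Hf k x0 - G t w k) = fro2 (G t w k - Hf k x0) by rewrite -fro2N opprB.
  rewrite e2 in y.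
  set F1 := fro2 (G t w k - Hf k x0) in y *.
  set F2 := fro2 (Hf k x1 - Hf k x0) in y mv.
  set Fg := fro2 (gt t w k) in mv *.
  set Fv := fro2 (Hf k x1 - G t w k) in y *.
  apply: (le_trans (ler_wpM2l a1' y)).
  have -> : (1 - alpha) * ((1 + eps) * F1 + (1 + eps^-1) * F2) =
            a * F1 + ((1 - alpha) * (1 + eps^-1)) * F2 by rewrite /a; ring.
  rewrite lerD2l.
  have -> : c * Fg = ((1 - alpha) * (1 + eps^-1)) * (Hb ^+ 2 * (eta ^+ 2 * Fg)) by rewrite /c; ring.
  by apply: ler_wpM2l => //; exact: mulr_ge0.
have step4 : (\int[P]_w (a * Dgap Hf (x t w) (G t w) + c * bnorm2 (gt t w))%:E =
   a%:E * Ex P (fun w => Dgap Hf (x t w) (G t w)) + c%:E * Ex P (fun w => bnorm2 (gt t w)))%E.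
  under eq_integral do rewrite EFinD EFinM EFinM.
  rewrite ge0_integralD //; try (by move=> w _; apply: mule_ge0; rewrite lee_fin);
    try (by apply: measurable_funeM; exact/measurable_EFinP);
    try (by move=> w _; rewrite lee_fin mulr_ge0);
    try (by apply/measurable_EFinP; apply: measurable_funM => //; exact: measurable_cst).
  have mDE : measurable_fun setT (fun w => (Dgap Hf (x t w) (G t w))%:E) by exact/measurable_EFinP.
  have mbE : measurable_fun setT (fun w => (bnorm2 (gt t w))%:E) by exact/measurable_EFinP.
  rewrite /Ex (ge0_integralZl P measurableT mDE (k := a%:E)) //; last by move=> w _; rewrite lee_fin.
  by rewrite (ge0_integralZl P measurableT mbE (k := c%:E)) //; move=> w _; rewrite lee_fin.
have step5 : (Ex P (fun w => bnorm2 (gt t w)) <=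
   Ex P (fun w => bnorm2 (fun k => surr_grad Hf Phi (x t w) (G t w) k)) + (sigma ^+ 2 / B%:R)%:E)%E.
  set fs := [set f | (exists s k' i j, (s <= t)%N /\ f = fun w => G s w k' i j)
                     \/ (exists s k' l', (1 <= s <= t)%N /\ f = fun w => x s w k' 0 l')].
  have hfs : forall f, fs f -> measurable_fun setT f.
    by move=> f [[s [k' [i [j [_ ->]]]]] | [s [k' [l [_ ->]]]]]; [exact: mG | exact: mx].
  have Fm := gen_by_meas hfs.
  have FI := @gen_by_I R dO Omega fs.
  pose I := {k : 'I_K.+1 & 'I_(d k)}.
  pose gt' (p : I) w := gt t w (tag p) 0 (tagged p).
  pose g' (p : I) w := surr_grad Hf Phi (x t w) (G t w) (tag p) 0 (tagged p).
  have s20 : 0 <= sigma ^+ 2 / B%:R by rewrite divr_ge0 // sqr_ge0.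
  have hE p : cexp_eq P (gen_by fs) (gt' p) (g' p) := Hunb t tT (tag p) (tagged p).
  have hV := Hvar t tT.
  have eqX : (fun w => bnorm2 (fun k => gt t w k - surr_grad Hf Phi (x t w) (G t w) k)) =
             (fun w => \sum_p (gt' p w - g' p w) ^+ 2).
    by apply: funext => w; rewrite bnorm2_sig; apply: eq_bigr => p _; rewrite !mxE.
  rewrite eqX in hV.
  have := @var_bound R dO Omega P (gen_by fs) FI Fm I gt' g' (sigma ^+ 2 / B%:R)
    (@gen_by_all R dO Omega fs I) s20 hE hV.
  have -> : (fun w => bnorm2 (gt t w)) = (fun w => (\sum_p gt' p w ^+ 2)%R).
    by apply: funext => w; rewrite bnorm2_sig.
  have -> : (fun w => bnorm2 (fun k => surr_grad Hf Phi (x t w) (G t w) k)) =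
            (fun w => (\sum_p g' p w ^+ 2)%R).
    by apply: funext => w; rewrite bnorm2_sig.
  by [].
refine (le_trans step12 _); refine (le_trans step3 _); rewrite step4.
apply: leeD2l; exact: lee_wpmul2l step5.
Qed.
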